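(* Let $k\ge2$, $IS\in\{\Box,\blacksquare\}^k$, and let $\tau$ be a correct compositional translation from $\mathrm{SYNCSIMPLE}$ into $\mathrm{LOCKSIMPLE}_{k,IS}$. Then for every $1\le i\le k$: $\#(P_i,\tau(!))+\#(P_i,\tau(?))\le\#(T_i,\tau(!))+\#(T_i,\tau(?))$, where $\#(S,r)$ is the number of occurrences of the symbol $S$ in the word $r$.
   Context: $\mathrm{SYNCSIMPLE}$: subprocesses are $\mathcal{U} ::= \checkmark \mid 0 \mid\, !\mathcal{U} \mid\, ?\mathcal{U}$; a process is a finite parallel composition $\mathcal{U}_1\mid\cdots\mid\mathcal{U}_n$ ($\mid$ associative, commutative, $0$ a unit). Reduction: $!\mathcal{U}_1\mid ?\mathcal{U}_2\mid \mathcal{P}\to \mathcal{U}_1\mid\mathcal{U}_2\mid\mathcal{P}$. Successful: of the form $\checkmark\mid\mathcal{P}$. May-convergent: reduces in zero or more steps to a successful process; must-convergent: every reachable process is may-convergent. $\mathrm{LOCKSIMPLE}_{k,IS}$ ($k$ locks, initial store $IS\in\{\Box,\blacksquare\}^k$, $\Box$ empty, $\blacksquare$ full): subprocesses are words over $\{P_1,T_1,\dots,P_k,T_k\}$ followed by $0$ or $\checkmark$, processes are parallel compositions. States $(\mathcal{P},C)$: $(P_i\mathcal{U}\mid\mathcal{P},C)\to(\mathcal{U}\mid\mathcal{P},C[C_i:=\blacksquare])$ only if $C_i=\Box$; $(T_i\mathcal{U}\mid\mathcal{P},C)\to(\mathcal{U}\mid\mathcal{P},C[C_i:=\Box])$ always.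 A state is successful if its process contains $\checkmark$; may-/must-convergence of states analogous; a process $\mathcal{P}$ is may/must-convergent iff $(\mathcal{P},IS)$ is. A compositional translation $\tau$ is given by words $\tau(!),\tau(?)$ over $\{P_i,T_i\}$ with $\tau(0)=0$, $\tau(\checkmark)=\checkmark$, $\tau(!\mathcal{U})=\tau(!)\tau(\mathcal{U})$, $\tau(?\mathcal{U})=\tau(?)\tau(\mathcal{U})$, $\tau(\mathcal{P}_1\mid\mathcal{P}_2)=\tau(\mathcal{P}_1)\mid\tau(\mathcal{P}_2)$; it is correct if it preserves and reflects may-convergence and must-convergence of every $\mathrm{SYNCSIMPLE}$-process. *)

(* Defs.v *)
From Stdlib Require Import List Permutation Relation_Operators.
From mathcomp Require Import all_boot.
Set Implicit Arguments.
Unset Strict Implicit.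
Unset Printing Implicit Defensive.

Inductive sub_sync : Type :=
| SSucc : sub_sync
| SZero : sub_sync
| SSend : sub_sync -> sub_sync
| SRecv : sub_sync -> sub_sync.

(* A process is a finite parallel composition, represented as a list taken
   up to permutation (| associative and commutative). *)
Definition proc_sync := list sub_sync.

Definition step_sync (p q : proc_sync) : Prop :=
  exists u1 u2 r,
    Permutation p (SSend u1 :: SRecv u2 :: r) /\
    Permutation q (u1 :: u2 :: r).

Definition successful_sync (p : proc_sync) : Prop := List.In SSucc p.

Definition reach_sync := clos_refl_trans proc_sync step_sync.

Definition may_sync (p : proc_sync) : Prop :=
  exists q, reach_sync p q /\ successful_sync q.

Definition must_sync (p : proc_sync) : Prop :=
  forall q, reach_sync p q -> may_sync q.

(* Symbols P_i, T_i for i : 'I_k (0-based index i stands for lock i+1). *)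
Inductive lsym (k : nat) : Type :=
| LP : 'I_k -> lsym k
| LT : 'I_k -> lsym k.

(* A subprocess is a word over the symbols followed by 0 (false) or
   checkmark (true). *)
Definition sub_lock (k : nat) : Type := (seq (lsym k) * bool)%type.
Definition proc_lock (k : nat) : Type := list (sub_lock k).

(* Store: true = full (black square), false = empty (white square). *)
Definition store (k : nat) : Type := {ffun 'I_k -> bool}.

Definition upd (k : nat) (C : store k) (i : 'I_k) (b : bool) : store k :=
  [ffun j => if j == i then b else C j].

Definition state (k : nat) : Type := (proc_lock k * store k)%type.

Inductive step_lock (k : nat) : state k -> state k -> Prop :=
| step_P : forall (i : 'I_k) w e r (p p' : proc_lock k) (C : store k),
    Permutation p ((LP i :: w, e) :: r) ->
    Permutation p' ((w, e) :: r) ->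
    C i = false ->
    step_lock (p, C) (p', upd C i true)
| step_T : forall (i : 'I_k) w e r (p p' : proc_lock k) (C : store k),
    Permutation p ((LT i :: w, e) :: r) ->
    Permutation p' ((w, e) :: r) ->
    step_lock (p, C) (p', upd C i false).

Definition successful_lock (k : nat) (s : state k) : Prop :=
  List.In ([::], true) s.1.

Definition reach_lock (k : nat) := clos_refl_trans (state k) (@step_lock k).

Definition may_lock (k : nat) (s : state k) : Prop :=
  exists s', reach_lock s s' /\ successful_lock s'.

Definition must_lock (k : nat) (s : state k) : Prop :=
  forall s', reach_lock s s' -> may_lock s'.

Fixpoint tr_sub (k : nat) (ts tr : seq (lsym k)) (u : sub_sync) : sub_lock k :=
  match u with
  | SSucc => ([::], true)
  | SZero => ([::], false)
  | SSend u' => let (w, e) := tr_sub ts tr u' in (ts ++ w, e)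
  | SRecv u' => let (w, e) := tr_sub ts tr u' in (tr ++ w, e)
  end.

Definition tr_proc (k : nat) (ts tr : seq (lsym k)) (p : proc_sync) : proc_lock k :=
  map (tr_sub ts tr) p.

(* ts = tau(!), tr = tau(?) *)
Definition correct_translation (k : nat) (IS : store k) (ts tr : seq (lsym k)) : Prop :=
  forall p : proc_sync,
    (may_sync p <-> may_lock (tr_proc ts tr p, IS)) /\
    (must_sync p <-> must_lock (tr_proc ts tr p, IS)).

Definition countP (k : nat) (i : 'I_k) (w : seq (lsym k)) : nat :=
  count (fun s => match s with LP j => j == i | LT _ => false end) w.
Definition countT (k : nat) (i : 'I_k) (w : seq (lsym k)) : nat :=
  count (fun s => match s with LT j => j == i | LP _ => false end) w.

(* Main.v *)
Require Import Defs.
From Stdlib Require Import List Permutation Relation_Operators.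
From mathcomp Require Import all_boot.
From mathcomp Require Import zify.
Set Implicit Arguments.
Unset Strict Implicit.
Unset Printing Implicit Defensive.

Lemma catE (A : Type) (s1 s2 : seq A) : s1 ++ s2 = app s1 s2.
Proof. by elim: s1 => //= a s IH; rewrite IH. Qed.

Lemma perm_count (A : Type) (f : A -> bool) (l l' : list A) :
  Permutation l l' -> count f l = count f l'.
Proof.
elim=> //= [x l1 l2 _ -> | x y l1 | l1 l2 l3 _ -> _ ->] //.
by rewrite addnCA.
Qed.

Lemma count_In (A : Type) (f : A -> bool) (l : list A) :
  0 < count f l -> exists x, In x l /\ f x.
Proof.
elim: l => //= a l IH.
case fa: (f a) => /= H; first by exists a; split; [left|].
by have [x [Hx fx]] := IH H; exists x; split; [right|].
Qed.

Lemma perm_two (A : Type) (a b : A) (q : list A) :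
  In a q -> In b q -> a <> b -> exists m, Permutation q (a :: b :: m).
Proof.
move=> Ha Hb Hab.
have [l1 [l2 E]] := In_split _ _ Ha.
have Hb' : In b (app l1 l2).
  subst q. apply in_app_or in Hb. apply in_or_app.
  case: Hb => H; [by left| case: H => H; [by case: Hab | by right]].
have [m1 [m2 E2]] := In_split _ _ Hb'.
exists (app m1 m2). subst q.
apply: Permutation_trans; first by apply: Permutation_sym; apply: Permutation_middle.
apply: perm_skip. rewrite E2.
by apply: Permutation_sym; apply: Permutation_middle.
Qed.

Definition isSend (u : sub_sync) := if u is SSend _ then true else false.
Definition isRecv (u : sub_sync) := if u is SRecv _ then true else false.
Definition isChk (u : sub_sync) :=
  match u with SSend SSucc | SRecv SSucc => true | _ => false end.
Definition okU (u : sub_sync) : Prop :=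
  u = SZero \/ (exists v, u = SSend v /\ (v = SZero \/ v = SSucc))
            \/ (exists v, u = SRecv v /\ (v = SZero \/ v = SSucc)).

Definition Inv (q : proc_sync) : Prop :=
  In SSucc q \/ (Forall okU q /\ count isSend q = count isRecv q /\ 0 < count isChk q).

Lemma Inv_step q q' : Inv q -> step_sync q q' -> Inv q'.
Proof.
move=> HI [u1 [u2 [r [Hp Hp']]]].
case: HI => [Hs | [HF [Hc Hk]]].
  left. apply: (Permutation_in _ (Permutation_sym Hp')).
  have := Permutation_in _ Hp Hs. by case=> [//|[//|H]]; right; right.
have HF2 := Permutation_Forall Hp HF.
inversion HF2 as [|? ? H1 HF3]; subst.
inversion HF3 as [|? ? H2 HF4]; subst.
have Hu1 : u1 = SZero \/ u1 = SSucc.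
  case: H1 => [H|[[v [E Hv]]|[v [E _]]]]; try discriminate.
  by case: E => ->.
have Hu2 : u2 = SZero \/ u2 = SSucc.
  case: H2 => [H|[[v [E _]]|[v [E Hv]]]]; try discriminate.
  by case: E => ->.
case: Hu1 => Hu1; last first.
  left; subst; apply: (Permutation_in _ (Permutation_sym Hp')); by left.
case: Hu2 => Hu2; last first.
  left; subst; apply: (Permutation_in _ (Permutation_sym Hp')); by right; left.
subst. right. split; [|split].
- apply: (Permutation_Forall (Permutation_sym Hp')).
  by constructor; [left|constructor; [left|]].
- rewrite (perm_count isSend Hp') (perm_count isRecv Hp') /=.
  move: Hc; rewrite (perm_count _ Hp) (perm_count isRecv Hp) /=.
  move=> /= H; lia.
- by rewrite (perm_count _ Hp') /=; move: Hk; rewrite (perm_count _ Hp) /=.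
Qed.

Lemma Inv_reach q q' : reach_sync q q' -> Inv q -> Inv q'.
Proof.
elim=> [x y H|x|x y z _ IH1 _ IH2] //; last by move=> /IH1 /IH2.
by move=> HI; apply: Inv_step HI H.
Qed.

Lemma Inv_may q : Inv q -> may_sync q.
Proof.
case=> [Hs | [HF [Hc Hk]]]; first by exists q; split; [apply: rt_refl|].
have [x [Hx Cx]] := count_In Hk.
have HFx : okU x by move: HF; rewrite Forall_forall => /(_ x Hx).
case: x Hx Cx HFx => // [[]|[]] // Hx _ _.
- have : 0 < count isRecv q.
    rewrite -Hc; have [l1 [l2 ->]] := In_split _ _ Hx.
    by rewrite -catE count_cat /= addnS.
  move=> /count_In [y [Hy Ry]].
  case: y Hy Ry => // u Hy _.
  have [m Hm] := perm_two Hx Hy (fun H => ltac:(discriminate H)).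
  exists (SSucc :: u :: m); split; last by left.
  apply: rt_step; exists SSucc, u, m; split => //.
- have : 0 < count isSend q.
    rewrite Hc; have [l1 [l2 ->]] := In_split _ _ Hx.
    by rewrite -catE count_cat /= addnS.
  move=> /count_In [y [Hy Ry]].
  case: y Hy Ry => // u Hy _.
  have [m Hm] := perm_two Hy Hx (fun H => ltac:(discriminate H)).
  exists (u :: SSucc :: m); split; last by right; left.
  apply: rt_step; exists u, SSucc, m; split => //.
Qed.

Lemma Inv_must q : Inv q -> must_sync q.
Proof. by move=> HI q' Hr; apply: Inv_may; apply: Inv_reach Hr HI. Qed.
Lemma perm_mid (A : Type) (l1 l2 : seq A) a :
  Permutation (a :: l1 ++ l2) (l1 ++ a :: l2).
Proof. rewrite !catE; apply: Permutation_middle. Qed.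

Section L.
Variable k : nat.
Definition wstate := (seq (seq (lsym k)) * store k)%type.

Inductive wstep : wstate -> wstate -> Prop :=
| wP : forall i w1 w w2 (C : store k), C i = false ->
    wstep (w1 ++ (LP i :: w) :: w2, C) (w1 ++ w :: w2, upd C i true)
| wT : forall i w1 w w2 (C : store k),
    wstep (w1 ++ (LT i :: w) :: w2, C) (w1 ++ w :: w2, upd C i false).

Definition wreach := clos_refl_trans wstate wstep.

Lemma wstep_size s s' : wstep s s' -> size s'.1 = size s.1.
Proof. by case=> *; rewrite /= !size_cat. Qed.

Lemma wreach_size s s' : wreach s s' -> size s'.1 = size s.1.
Proof.
elim=> // [x y /wstep_size //|x y z _ H1 _ H2]; by rewrite H2 H1.
Qed.

Lemma zip_mid (A B : Type) (w1 w2 : seq A) x (fs : seq B) :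
  size fs = size (w1 ++ x :: w2) ->
  exists f1 e f2, fs = f1 ++ e :: f2 /\ size f1 = size w1 /\ size f2 = size w2.
Proof.
move=> Hs.
exists (take (size w1) fs).
case E: (drop (size w1) fs) => [|e f2].
  have := size_drop (size w1) fs. rewrite E Hs size_cat /= => ?. exfalso; lia.
exists e, f2; split; first by rewrite -E cat_take_drop.
have Hl : size w1 <= size fs by rewrite Hs size_cat /=; lia.
split; first by rewrite size_takel.
have := size_drop (size w1) fs. rewrite E Hs size_cat /=. lia.
Qed.

Lemma lift_step fs ws C ws' C' :
  wstep (ws, C) (ws', C') -> size fs = size ws ->
  step_lock (zip ws fs, C) (zip ws' fs, C').
Proof.
move=> H; inversion H; subst => Hs.
- have [f1 [e [f2 [-> [Hs1 Hs2]]]]] := zip_mid Hs.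
  rewrite !zip_cat //=.
  apply: (@step_P _ i w e (zip w1 f1 ++ zip w2 f2)) => //;
    apply: Permutation_sym; apply: perm_mid.
- have [f1 [e [f2 [-> [Hs1 Hs2]]]]] := zip_mid Hs.
  rewrite !zip_cat //=.
  apply: (@step_T _ i w e (zip w1 f1 ++ zip w2 f2)) => //;
    apply: Permutation_sym; apply: perm_mid.
Qed.

Lemma lift_reach fs s s' :
  wreach s s' -> size fs = size s.1 ->
  reach_lock (zip s.1 fs, s.2) (zip s'.1 fs, s'.2).
Proof.
elim=> [[a b] [c d] H|x|x y z H1 IH1 H2 IH2] Hs.
- by apply: rt_step; apply: lift_step H Hs.
- by apply: rt_refl.
- apply: rt_trans (IH1 Hs) (IH2 _).
  by rewrite (wreach_size H1).
Qed.

Lemma zip_split (A B : Type) (l1 l2 : seq (A * B)) x ws fs :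
  zip ws fs = l1 ++ x :: l2 -> size ws = size fs ->
  exists w1 a w2 f1 e f2, ws = w1 ++ a :: w2 /\ fs = f1 ++ e :: f2 /\
    size w1 = size f1 /\ x = (a, e) /\ l1 = zip w1 f1 /\ l2 = zip w2 f2.
Proof.
elim: l1 ws fs => [|y l1 IH] [|a ws] [|e fs] //= [E1 E2] [Hs].
- by exists [::], a, ws, [::], e, fs; subst.
- have [w1 [a' [w2 [f1 [e' [f2 [-> [-> [H1 [-> [-> ->]]]]]]]]]]] := IH _ _ E2 Hs.
  exists (a :: w1), a', w2, (e :: f1), e', f2; subst; split => //.
  by split => //=; rewrite H1.
Qed.

Lemma pull_step q C q' C' ws fs :
  step_lock (q, C) (q', C') -> Permutation q (zip ws fs) -> size ws = size fs ->
  exists ws', wstep (ws, C) (ws', C') /\ Permutation q' (zip ws' fs).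
Proof.
move=> H; inversion H as [i w e r p p0 C0 HA HB HC|i w e r p p0 C0 HA HB]; subst => Hq Hs.
- have Hin : In (LP i :: w, e) (zip ws fs).
    by apply: (Permutation_in _ (Permutation_trans (Permutation_sym HA) Hq)); left.
  have [l1 [l2 E]] := In_split _ _ Hin. rewrite -catE in E.
  have [w1 [a [w2 [f1 [e' [f2 [-> [-> [H1 [[<- <-] [E1 E2]]]]]]]]]]] := zip_split E Hs.
  exists (w1 ++ w :: w2); split; first by constructor.
  rewrite zip_cat //= -E1 -E2.
  apply: Permutation_trans HB _.
  apply: Permutation_trans (perm_mid _ _ _).
  apply: perm_skip.
  apply: (@Permutation_cons_inv _ _ _ (LP i :: w, e)).
  apply: Permutation_trans (Permutation_sym HA) _.
  apply: Permutation_trans Hq _. rewrite E.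
  apply: Permutation_sym; apply: perm_mid.
- have Hin : In (LT i :: w, e) (zip ws fs).
    by apply: (Permutation_in _ (Permutation_trans (Permutation_sym HA) Hq)); left.
  have [l1 [l2 E]] := In_split _ _ Hin. rewrite -catE in E.
  have [w1 [a [w2 [f1 [e' [f2 [-> [-> [H1 [[<- <-] [E1 E2]]]]]]]]]]] := zip_split E Hs.
  exists (w1 ++ w :: w2); split; first by constructor.
  rewrite zip_cat //= -E1 -E2.
  apply: Permutation_trans HB _.
  apply: Permutation_trans (perm_mid _ _ _).
  apply: perm_skip.
  apply: (@Permutation_cons_inv _ _ _ (LT i :: w, e)).
  apply: Permutation_trans (Permutation_sym HA) _.
  apply: Permutation_trans Hq _. rewrite E.
  apply: Permutation_sym; apply: perm_mid.
Qed.

Lemma pull_reach fs s s' :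
  reach_lock s s' -> forall ws, Permutation s.1 (zip ws fs) -> size ws = size fs ->
  exists ws', wreach (ws, s.2) (ws', s'.2) /\ Permutation s'.1 (zip ws' fs)
              /\ size ws' = size fs.
Proof.
elim=> [[a b] [c d] H|x|x y z H1 IH1 H2 IH2] ws Hp Hs.
- have [ws' [Hw Hp']] := pull_step H Hp Hs.
  exists ws'; split; [by apply: rt_step|split=> //].
  by rewrite (wstep_size Hw).
- by exists ws; split; [apply: rt_refl|].
- have [ws1 [Hw1 [Hp1 Hs1]]] := IH1 ws Hp Hs.
  have [ws2 [Hw2 [Hp2 Hs2]]] := IH2 ws1 Hp1 Hs1.
  by exists ws2; split; [apply: rt_trans Hw1 Hw2|].
Qed.

Lemma In_zip_nth (A B : Type) (a : A) (b : B) ws fs x0 y0 :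
  In (a, b) (zip ws fs) -> exists n, nth x0 ws n = a /\ nth y0 fs n = b.
Proof.
elim: ws fs => [|w ws IH] [|f fs] //= [[-> ->]|H]; first by exists 0.
by have [n Hn] := IH _ H; exists n.+1.
Qed.

Lemma wstep_empty s s' n : wstep s s' -> nth [::] s.1 n = [::] -> nth [::] s'.1 n = [::].
Proof.
case=> [i w1 w w2 C _|i w1 w w2 C] /=; rewrite !nth_cat; case: ifP => // _;
  by case: (n - size w1).
Qed.

Lemma wreach_empty s s' n : wreach s s' -> nth [::] s.1 n = [::] -> nth [::] s'.1 n = [::].
Proof.
elim=> // [x y H|x y z _ H1 _ H2]; [exact: wstep_empty H | by move/H1/H2].
Qed.

Definition cPs i (ws : seq (seq (lsym k))) := sumn (map (countP i) ws).
Definition cTs i (ws : seq (seq (lsym k))) := sumn (map (countT i) ws).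

Lemma wstep_inv i s s' W (IS : store k) :
  wstep s s' ->
  cPs i W + cTs i s.1 + IS i <= cPs i s.1 + cTs i W + s.2 i ->
  cPs i W + cTs i s'.1 + IS i <= cPs i s'.1 + cTs i W + s'.2 i.
Proof.
rewrite /cPs /cTs.
case=> [j w1 w w2 C HC|j w1 w w2 C] /=; rewrite !map_cat !sumn_cat /= /upd !ffunE;
  case: (eqVneq i j) => [->|Hne]; rewrite ?eqxx /=.
- rewrite HC; lia.
- lia.
- case: (C j); lia.
- lia.
Qed.

Lemma wreach_inv i s s' W (IS : store k) :
  wreach s s' ->
  cPs i W + cTs i s.1 + IS i <= cPs i s.1 + cTs i W + s.2 i ->
  cPs i W + cTs i s'.1 + IS i <= cPs i s'.1 + cTs i W + s'.2 i.
Proof.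
elim=> // [x y H|x y z _ H1 _ H2]; [exact: wstep_inv H | by move/H1/H2].
Qed.
End L.

Lemma stage k (IS : store k) W fs j ws C :
  must_lock (zip W fs, IS) -> size fs = size W ->
  (forall n, nth false fs n = true -> n = j) ->
  wreach (W, IS) (ws, C) ->
  exists ws' C', wreach (ws, C) (ws', C') /\ nth [::] ws' j = [::].
Proof.
move=> Hm Hs Hf Hr.
have Hr' := lift_reach Hr Hs.
have [s' [Hr2 Hsucc]] := Hm _ Hr'.
have Hsz : size ws = size fs by rewrite (wreach_size Hr) /= Hs.
have [ws' [Hw [Hp _]]] := pull_reach Hr2 (Permutation_refl _) Hsz.
exists ws', s'.2; split => //.
have Hin : In ([::], true) (zip ws' fs) := Permutation_in _ Hp Hsucc.
have [n [Hn1 Hn2]] := In_zip_nth [::] false Hin.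
by rewrite -(Hf n Hn2).
Qed.

Lemma okS0 : okU SZero. Proof. by left. Qed.
Lemma okSS : okU (SSend SSucc). Proof. by right; left; exists SSucc; split; [|right]. Qed.
Lemma okSZ : okU (SSend SZero). Proof. by right; left; exists SZero; split; [|left]. Qed.
Lemma okRS : okU (SRecv SSucc). Proof. by right; right; exists SSucc; split; [|right]. Qed.
Lemma okRZ : okU (SRecv SZero). Proof. by right; right; exists SZero; split; [|left]. Qed.

Ltac solveInv :=
  right; split; [do 4 (apply: Forall_cons; first by auto using okS0, okSS, okSZ, okRS, okRZ);
                 exact: Forall_nil | by []].

Theorem proposition4p2 (k : nat) (IS : store k) (ts tr : seq (lsym k)) :
  2 <= k ->
  correct_translation IS ts tr ->
  forall i : 'I_k,
    countP i ts + countP i tr <= countT i ts + countT i tr.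
Proof.
move=> _ Hc i.
set W := [:: ts; tr; ts; tr].
have M0 : must_lock (zip W [:: true; false; false; false], IS).
  have := (Hc [:: SSend SSucc; SRecv SZero; SSend SZero; SRecv SZero]).2.1.
  rewrite /tr_proc /= !cats0 => H; apply: H; apply: Inv_must; solveInv.
have M1 : must_lock (zip W [:: false; true; false; false], IS).
  have := (Hc [:: SSend SZero; SRecv SSucc; SSend SZero; SRecv SZero]).2.1.
  rewrite /tr_proc /= !cats0 => H; apply: H; apply: Inv_must; solveInv.
have M2 : must_lock (zip W [:: false; false; true; false], IS).
  have := (Hc [:: SSend SZero; SRecv SZero; SSend SSucc; SRecv SZero]).2.1.
  rewrite /tr_proc /= !cats0 => H; apply: H; apply: Inv_must; solveInv.
have M3 : must_lock (zip W [:: false; false; false; true], IS).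
  have := (Hc [:: SSend SZero; SRecv SZero; SSend SZero; SRecv SSucc]).2.1.
  rewrite /tr_proc /= !cats0 => H; apply: H; apply: Inv_must; solveInv.
have G0 : forall n, nth false [:: true; false; false; false] n = true -> n = 0 by case=> [|[|[|[|n]]]] //=; rewrite nth_nil.
have G1 : forall n, nth false [:: false; true; false; false] n = true -> n = 1 by case=> [|[|[|[|n]]]] //=; rewrite nth_nil.
have G2 : forall n, nth false [:: false; false; true; false] n = true -> n = 2 by case=> [|[|[|[|n]]]] //=; rewrite nth_nil.
have G3 : forall n, nth false [:: false; false; false; true] n = true -> n = 3 by case=> [|[|[|[|n]]]] //=; rewrite nth_nil.
have R0 : wreach (W, IS) (W, IS) by apply: rt_refl.
have [ws1 [C1 [R1 E1]]] := stage (j := 0) M0 erefl (G0) R0.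
have R1' : wreach (W, IS) (ws1, C1) := rt_trans _ _ _ _ _ R0 R1.
have [ws2 [C2 [R2 E2]]] := stage (j := 1) M1 erefl (G1) R1'.
have R2' : wreach (W, IS) (ws2, C2) := rt_trans _ _ _ _ _ R1' R2.
have E1' := wreach_empty R2 E1.
have [ws3 [C3 [R3 E3]]] := stage (j := 2) M2 erefl (G2) R2'.
have R3' : wreach (W, IS) (ws3, C3) := rt_trans _ _ _ _ _ R2' R3.
have E1'' := wreach_empty R3 E1'.
have E2' := wreach_empty R3 E2.
have [ws4 [C4 [R4 E4]]] := stage (j := 3) M3 erefl (G3) R3'.
have R4' : wreach (W, IS) (ws4, C4) := rt_trans _ _ _ _ _ R3' R4.
have F1 := wreach_empty R4 E1''.
have F2 := wreach_empty R4 E2'.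
have F3 := wreach_empty R4 E3.
have Hsz := wreach_size R4'.
have Hinv := wreach_inv (W := W) (IS := IS) (i := i) R4' (leqnn _).
have Hb := leq_b1 (C4 i).
clear R4 R4'.
move: Hsz F1 F2 F3 E4 Hinv.
case: ws4 => [|a [|b [|c [|d [|]]]]] //= _ -> -> -> ->.
rewrite /cPs /cTs /W /= => H; lia.
Qed.
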